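(* Let $W$ be any channel in the support of $\mathcal{W}_{Q,\varepsilon}$, let $n\ge1$, and let $r\ge 0$. If $\mathcal{R}^{(0)}_{W,n}\ge r$, then the graph $G_{W,n}$ has a bipartite independent set of size at least $$2^{rn}-2^{rn/2}\left((1+2^q)^n-2^{nq}\right).$$
   Context: Fix an integer $q\ge1$, $Q=2^q$, $[Q]=\{1,\dots,Q\}$, and a symbol $\phi\notin[Q]$. A channel is a function $W=(W_1,W_2)$ with $W_i:[Q]^2\to[Q]\cup\{\phi\}$. For block length $n$, $W^{(n)}_i(x,y)=(W_i(x_1,y_1),\dots,W_i(x_n,y_n))$ for $x,y\in[Q]^n$. A zero-error code of block length $n$ with message sets $[M_1],[M_2]$ consists of encoders $E_i:[M_i]\to[Q]^n$ and decoders $D_i:([Q]\cup\{\phi\})^n\to[M_i]$ with $D_i(W^{(n)}_i(E_1(m_1),E_2(m_2)))=m_i$ for $i=1,2$ and all $(m_1,m_2)\in[M_1]\times[M_2]$. $\mathcal{R}^{(0)}_{W,n}$ is the supremum of $R_1+R_2$ over rate pairs for which a zero-error code of block length $n$ with $M_i=2^{R_in}$ (positive integers) exists. $\mathcal{W}_{Q,\varepsilon}$ is the distribution over channels in which, independently for every $(x,y)\in[Q]^2$, $W(x,y)=(\phi,\phi)$ with probability $\varepsilon$ and $W(x,y)=(x,y)$ otherwise. $G_{W,n}$ is the bipartite graph whose two sides are two copies of $[Q]^n$, with $x^{(n)}$ (left) adjacent to $y^{(n)}$ (right) iff there is an index $i$ with $W(x_i,y_i)=(\phi,\phi)$. In a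 bipartite graph with sides $X,Y$, a bipartite independent set (BPIS) is a pair $(A,B)$ with $A\subseteq X$, $B\subseteq Y$ and no edge between $A$ and $B$; its size is $|A|\cdot|B|$. Logarithms are base 2. *)

(* Defs.v *)
From Stdlib Require Import Reals.
From mathcomp Require Import all_boot.
Set Implicit Arguments. Unset Strict Implicit. Unset Printing Implicit Defensive.

(* Input alphabet [Q] with Q = 2^q, represented 0-based as 'I_(2^q). *)
Notation sym q := ('I_(2 ^ q)).
(* Output alphabet [Q] ∪ {phi}: None plays the role of phi. *)
Notation osym q := (option 'I_(2 ^ q)).

Definition channel (q : nat) := sym q -> sym q -> osym q * osym q.

(* Support of W_{Q,eps}: each (x,y) independently is erased to (phi,phi)
   (probability eps) or transmitted as (x,y) (probability 1 - eps). *)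
Definition in_support (q : nat) (eps : R) (W : channel q) : Prop :=
  forall x y : sym q,
    (W x y = (None, None) /\ Rlt 0 eps) \/
    (W x y = (Some x, Some y) /\ Rlt eps 1).

Definition word (q n : nat) := {ffun 'I_n -> sym q}.
Definition oword (q n : nat) := {ffun 'I_n -> osym q}.

Definition Wn1 q n (W : channel q) (x y : word q n) : oword q n :=
  [ffun i => (W (x i) (y i)).1].
Definition Wn2 q n (W : channel q) (x y : word q n) : oword q n :=
  [ffun i => (W (x i) (y i)).2].

Definition zero_error_code q (W : channel q) (n M1 M2 : nat) : Prop :=
  exists (E1 : 'I_M1 -> word q n) (E2 : 'I_M2 -> word q n)
         (D1 : oword q n -> 'I_M1) (D2 : oword q n -> 'I_M2),
    forall (m1 : 'I_M1) (m2 : 'I_M2),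
      D1 (Wn1 W (E1 m1) (E2 m2)) = m1 /\ D2 (Wn2 W (E1 m1) (E2 m2)) = m2.

Definition achievable_pair q (W : channel q) (n : nat) (R1 R2 : R) : Prop :=
  exists M1 M2 : nat, (0 < M1)%N /\ (0 < M2)%N /\
    INR M1 = Rpower 2 (R1 * INR n) /\ INR M2 = Rpower 2 (R2 * INR n) /\
    zero_error_code W n M1 M2.

(* The set of sum-rates R1 + R2 of achievable pairs; R^{(0)}_{W,n} is its
   supremum. *)
Definition sum_rates q (W : channel q) (n : nat) (s : R) : Prop :=
  exists R1 R2, achievable_pair W n R1 R2 /\ s = Rplus R1 R2.

Definition G_adj q n (W : channel q) (x y : word q n) : Prop :=
  exists i : 'I_n, W (x i) (y i) = (None, None).

(* Bipartite independent set (A,B) of G_{W,n}; its size is #|A| * #|B|. *)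
Definition is_BPIS q n (W : channel q) (A B : {set word q n}) : Prop :=
  forall x y, x \in A -> y \in B -> ~ G_adj W x y.

(* Main.v *)
Require Import Defs.
From Stdlib Require Import Reals Lra Lia Classical.
From mathcomp Require Import all_boot zify.
Set Implicit Arguments. Unset Strict Implicit.

Section Comb.
Local Open Scope nat_scope.

Definition erased q n := [set w : oword q n | [exists i, w i == None]].

Lemma card_erased q n :
  #|erased q n| + 2 ^ (n * q) <= (1 + 2 ^ q) ^ n.
Proof.
have H := cardsC (erased q n).
rewrite card_ffun card_option in H.
have co : #|'I_n| = n by exact: card_ord.
have cq : #|'I_(2^q)| = 2^q by exact: card_ord.
rewrite co cq in H.
set f := fun w : word q n => ([ffun i => Some (w i)] : oword q n).
have finj : injective f.
  move=> x y /ffunP E; apply/ffunP=> i; have := E i; rewrite !ffunE.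
  by case.
have sub : f @: [set: word q n] \subset ~: erased q n.
  apply/subsetP=> w /imsetP [x _ ->]; rewrite !inE; apply/existsPn=> i.
  by rewrite ffunE.
have := subset_leq_card sub; rewrite card_imset // cardsT card_ffun co cq.
rewrite -expnM mulnC => Hl.
by rewrite add1n -H leq_add2l.
Qed.

Lemma bounded_max (P : nat -> Prop) B :
  (exists k, P k) -> (forall k, P k -> k <= B) ->
  exists m, P m /\ forall k, P k -> k <= m.
Proof.
elim: B => [|B IH] [k Pk] Hb.
  exists k; split=> // j Pj; have := Hb _ Pj; have := Hb _ Pk; lia.
destruct (classic (P B.+1)) as [HP|HP].
  by exists B.+1; split.
apply: IH; first by exists k.
move=> j Pj; have := Hb _ Pj; rewrite leq_eqVlt => /orP [/eqP E|] //.
by subst j.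
Qed.

Lemma code_inj1 q (W : channel q) n M1 M2 (E1 : 'I_M1 -> word q n) (E2 : 'I_M2 -> word q n)
  (D1 : oword q n -> 'I_M1) (D2 : oword q n -> 'I_M2) :
  0 < M2 ->
  (forall (m1 : 'I_M1) (m2 : 'I_M2),
      D1 (Wn1 W (E1 m1) (E2 m2)) = m1 /\ D2 (Wn2 W (E1 m1) (E2 m2)) = m2) ->
  injective E1.
Proof.
move=> M2p H a b Eab.
have m2 : 'I_M2 := Ordinal M2p.
by have [Ha _] := H a m2; have [Hb _] := H b m2; rewrite -Ha -Hb Eab.
Qed.

Lemma code_inj2 q (W : channel q) n M1 M2 (E1 : 'I_M1 -> word q n) (E2 : 'I_M2 -> word q n)
  (D1 : oword q n -> 'I_M1) (D2 : oword q n -> 'I_M2) :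
  0 < M1 ->
  (forall (m1 : 'I_M1) (m2 : 'I_M2),
      D1 (Wn1 W (E1 m1) (E2 m2)) = m1 /\ D2 (Wn2 W (E1 m1) (E2 m2)) = m2) ->
  injective E2.
Proof.
move=> M1p H a b Eab.
have m1 : 'I_M1 := Ordinal M1p.
by have [_ Ha] := H m1 a; have [_ Hb] := H m1 b; rewrite -Ha -Hb Eab.
Qed.

Lemma code_bpis q (W : channel q) n M1 M2 :
  0 < M1 -> 0 < M2 -> zero_error_code W n M1 M2 ->
  (exists A B : {set word q n}, is_BPIS W A B /\
     M1 * M2 <= #|A| * #|B| + #|erased q n| * M2) /\
  (exists A B : {set word q n}, is_BPIS W A B /\
     M1 * M2 <= #|A| * #|B| + #|erased q n| * M1).
Proof.
move=> M1p M2p [E1 [E2 [D1 [D2 H]]]].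
have i1 := @code_inj1 q W n M1 M2 E1 E2 D1 D2 M2p H; have i2 := @code_inj2 q W n M1 M2 E1 E2 D1 D2 M1p H.
split.
- set I1 := [set m1 : 'I_M1 | [exists m2, [exists i, W (E1 m1 i) (E2 m2 i) == (None, None)]]].
  exists (E1 @: ~: I1), (E2 @: [set: 'I_M2]); split.
    move=> x y /imsetP [m1 Hm1 ->] /imsetP [m2 _ ->] [i Hi].
    move: Hm1; rewrite !inE => /negP; apply; apply/existsP; exists m2.
    by apply/existsP; exists i; apply/eqP.
  rewrite !card_imset // cardsT card_ord.
  have sub : I1 \subset D1 @: erased q n.
    apply/subsetP=> m1; rewrite inE => /existsP [m2 /existsP [i /eqP Hi]].
    apply/imsetP; exists (Wn1 W (E1 m1) (E2 m2)); last by have [-> _] := H m1 m2.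
    rewrite inE; apply/existsP; exists i; by rewrite ffunE Hi.
  have c1 := leq_trans (subset_leq_card sub) (leq_imset_card _ _).
  have c2 := cardsC I1; rewrite card_ord in c2.
  rewrite -mulnDl; apply: leq_mul => //; lia.
- set I2 := [set m2 : 'I_M2 | [exists m1, [exists i, W (E1 m1 i) (E2 m2 i) == (None, None)]]].
  exists (E1 @: [set: 'I_M1]), (E2 @: ~: I2); split.
    move=> x y /imsetP [m1 _ ->] /imsetP [m2 Hm2 ->] [i Hi].
    move: Hm2; rewrite !inE => /negP; apply; apply/existsP; exists m1.
    by apply/existsP; exists i; apply/eqP.
  rewrite !card_imset // cardsT card_ord.
  have sub : I2 \subset D2 @: erased q n.
    apply/subsetP=> m2; rewrite inE => /existsP [m1 /existsP [i /eqP Hi]].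
    apply/imsetP; exists (Wn2 W (E1 m1) (E2 m2)); last by have [_ ->] := H m1 m2.
    rewrite inE; apply/existsP; exists i; by rewrite ffunE Hi.
  have c1 := leq_trans (subset_leq_card sub) (leq_imset_card _ _).
  have c2 := cardsC I2; rewrite card_ord in c2.
  rewrite (mulnC #|erased q n|) -mulnDr; apply: leq_mul => //; lia.
Qed.

End Comb.

Local Open Scope R_scope.

Lemma real_ineq (t m M S K : R) :
  0 <= t -> 0 <= m -> m <= M -> 0 <= K -> t * t <= m * M ->
  0 <= S -> m * M <= S + K * m -> t * t - t * K <= S.
Proof.
intros ht hm hmM hK htt hS hmain.
destruct (Rlt_le_dec t K) as [h|h]; [nra|].
destruct (Rle_lt_dec m t) as [h2|h2]; nra.
Qed.

Definition Pach q (W : channel q) n (p : nat) : Prop :=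
  exists M1 M2 R1 R2, (0 < M1)%N /\ (0 < M2)%N /\
    INR M1 = Rpower 2 (R1 * INR n) /\ INR M2 = Rpower 2 (R2 * INR n) /\
    zero_error_code W n M1 M2 /\ p = (M1 * M2)%N.

Lemma INR_muln a b : INR (a * b)%N = INR a * INR b.
Proof. by rewrite -mult_INR. Qed.

Lemma INR_addn a b : INR (a + b)%N = INR a + INR b.
Proof. by rewrite -plus_INR. Qed.

Lemma leINR a b : (a <= b)%N -> INR a <= INR b.
Proof. by move/leP; apply: le_INR. Qed.

Theorem proposition1 (q : nat) (eps : R) (W : channel q) (n : nat) (r R0 : R) :
  (1 <= q)%N -> 0 <= eps <= 1 -> in_support eps W ->
  (1 <= n)%N -> 0 <= r ->
  is_lub (sum_rates W n) R0 -> r <= R0 ->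
  exists A B : {set word q n}, is_BPIS W A B /\
    Rpower 2 (r * INR n)
      - Rpower 2 (r * INR n / 2) * (INR ((1 + 2 ^ q) ^ n)%N - INR (2 ^ (n * q))%N)
    <= INR (#|A| * #|B|)%N.
Proof.
move=> _ _ _ n1 r0 [Hub Hleast] rR.
have nR : 0 < INR n by apply: lt_0_INR; apply/ltP.
have ln2 : 0 < ln 2 by rewrite -ln_1; apply: ln_increasing; lra.
have ex : exists p, Pach W n p.
  apply: NNPP => Hn.
  have : R0 <= R0 - 1.
    apply: Hleast => s [R1 [R2 [[M1 [M2 [h1 [h2 [h3 [h4 h5]]]]]] hs]]].
    exfalso; apply: Hn; exists (M1 * M2)%N, M1, M2, R1, R2; done.
  lra.
have bnd : forall p, Pach W n p -> (p <= #|word q n| * #|word q n|)%N.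
  move=> p [M1 [M2 [R1 [R2 [h1 [h2 [_ [_ [[E1 [E2 [D1 [D2 H]]]] ->]]]]]]]]].
  have c1 := leq_card E1 (code_inj1 h2 H).
  have c2 := leq_card E2 (code_inj2 h1 H).
  rewrite !card_ord in c1 c2.
  by apply: leq_mul.
have [P [[M1 [M2 [R1 [R2 [h1 [h2 [h3 [h4 [hc ->]]]]]]]]] Pmax]] := bounded_max ex bnd.
have Ppos : 0 < INR (M1 * M2)%N.
  rewrite INR_muln; apply: Rmult_lt_0_compat; apply: lt_0_INR; apply/ltP; done.
set u := ln (INR (M1 * M2)%N) / (ln 2 * INR n).
have Pu : Rpower 2 (u * INR n) = INR (M1 * M2)%N.
  rewrite /Rpower /u.
  have -> : ln (INR (M1 * M2)) / (ln 2 * INR n) * INR n * ln 2 = ln (INR (M1 * M2)).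
    field; lra.
  by rewrite exp_ln.
have su : forall s, sum_rates W n s -> s <= u.
  move=> s [S1 [S2 [[N1 [N2 [g1 [g2 [g3 [g4 g5]]]]]] ->]]].
  have hp : (N1 * N2 <= M1 * M2)%N.
    apply: Pmax; exists N1, N2, S1, S2; done.
  apply: Rnot_lt_le => hlt.
  have : Rpower 2 (u * INR n) < Rpower 2 ((S1 + S2) * INR n).
    apply: Rpower_lt; first lra.
    by apply: Rmult_lt_compat_r.
  rewrite Pu Rmult_plus_distr_r Rpower_plus -g3 -g4 -INR_muln.
  have := leINR hp; lra.
have Tle : Rpower 2 (r * INR n) <= INR (M1 * M2)%N.
  rewrite -Pu; apply: Rle_Rpower; first lra.
  apply: Rmult_le_compat_r; first lra.
  have := Hleast u su; lra.
have tt : Rpower 2 (r * INR n / 2) * Rpower 2 (r * INR n / 2) = Rpower 2 (r * INR n).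
  by rewrite -Rpower_plus; f_equal; field.
have t0 : 0 <= Rpower 2 (r * INR n / 2) by rewrite /Rpower; apply: Rlt_le; apply: exp_pos.
have ce := card_erased q n.
set K := INR ((1 + 2 ^ q) ^ n)%N - INR (2 ^ (n * q))%N.
have Ke : INR #|erased q n| <= K.
  rewrite /K; have := leINR ce; rewrite INR_addn; lra.
have Ke0 : 0 <= INR #|erased q n| by apply: pos_INR.
have [[A1 [B1 [b1 s1]]] [A2 [B2 [b2 s2]]]] := code_bpis h1 h2 hc.
have m1 := leINR s1; have m2 := leINR s2.
rewrite !INR_addn !INR_muln in m1 m2.
rewrite INR_muln in Tle.
have M1p : 0 <= INR M1 by apply: pos_INR.
have M2p : 0 <= INR M2 by apply: pos_INR.
destruct (Rle_lt_dec (INR M1) (INR M2)) as [hle|hlt].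
- exists A2, B2; split => //.
  rewrite -tt.
  apply: (real_ineq (m := INR M1) (M := INR M2)) => //; try lra.
    by apply: pos_INR.
  rewrite !INR_muln; have := Rmult_le_compat_r _ _ _ M1p Ke; lra.
- exists A1, B1; split => //.
  rewrite -tt.
  apply: (real_ineq (m := INR M2) (M := INR M1)) => //; try lra.
    by apply: pos_INR.
  rewrite !INR_muln; have := Rmult_le_compat_r _ _ _ M2p Ke; lra.
Qed.
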